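(* Let $e(\tau,s)$ be a complete equation of state, let $s_0$ be fixed, and assume the isentrope $\tau\mapsto e(\tau,s_0)$ is convex. Let $\mathcal A=\{\bm u=(\rho,\bm m,E)\in\mathbb R^{d+2}:\rho>0,\ \rho\,\mathsf e(\bm u)\ge \rho\, e(\rho^{-1},s_0)\}$, where $\mathsf e(\bm u)=E/\rho-\|\bm m\|^2_{\ell^2}/(2\rho^2)$. Let $\mathcal V$ be a finite index set and, for each $i\in\mathcal V$, let $\mathcal I(i)\subset\mathcal V$ be an index set containing $i$. Let $\{\mathsf U_i^n\}_{i\in\mathcal V}\subset\mathcal A$, and suppose there exist $\hat\lambda_{ij}>0$ such that $\overline{\mathsf U}^n_{ij}(\hat\lambda_{ij})\in\mathcal A$ for each $i\in\mathcal V$ and all $j\in\mathcal I(i)$. Define $$\mathsf U_i^{n+1}=\sum_{k\in\mathcal I(i)}\omega^n_{ik}\mathsf U_k^n+\sum_{j\in\mathcal I(i)\setminus\{i\}}\mu^n_{ij}\,\overline{\mathsf U}^n_{ij}(\hat\lambda_{ij}),$$ where $\omega^n_{ik},\mu^n_{ij}\in[0,1]$ and $\sum_{k\in\mathcal I(i)}\omega^n_{ik}+\sum_{j\in\mathcal I(i)\setminus\{i\}}\mu^n_{ij}=1$. Then $\mathsf U_i^{n+1}\in\mathcal A$ for every $i\in\mathcal V$.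
   Context: $\overline{\mathsf U}^n_{ij}(\lambda)$ denotes the auxiliary state $\tfrac12(\mathsf U_i^n+\mathsf U_j^n)-\tfrac1{2\lambda}(\mathbb f(\mathsf U_j^n)-\mathbb f(\mathsf U_i^n))\bm n_{ij}$ for some unit vector $\bm n_{ij}$, where $\mathbb f$ is the Euler flux; only the hypothesis that these states lie in $\mathcal A$ is used. A complete equation of state is a function $e(\tau,s)$ giving specific internal energy in terms of specific volume and specific entropy. *)

(* Defs.v *)
From HB Require Import structures.
From mathcomp Require Import all_boot all_order all_algebra.
From mathcomp Require Import reals.
Set Implicit Arguments. Unset Strict Implicit. Unset Printing Implicit Defensive.
Import Order.TTheory GRing.Theory Num.Theory.
Local Open Scope ring_scope.

(* Conserved state u = (rho, m_1, ..., m_d, E) in R^(d+2), as a column vector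
   indexed by 'I_(d.+2): index 0 is rho, indices 1..d are m, index d+1 is E. *)
Section Euler.
Variables (R : realType) (d : nat).

Definition st_rho (u : 'cV[R]_(d.+2)) : R := u (inord 0) ord0.
Definition st_E (u : 'cV[R]_(d.+2)) : R := u (inord d.+1) ord0.
Definition st_m2 (u : 'cV[R]_(d.+2)) : R :=
  \sum_(k < d) (u (inord k.+1) ord0) ^+ 2.

Definition st_eint (u : 'cV[R]_(d.+2)) : R :=
  st_E u / st_rho u - st_m2 u / (2 * st_rho u ^+ 2).

Definition admissible (e : R -> R -> R) (s0 : R) (u : 'cV[R]_(d.+2)) : Prop :=
  0 < st_rho u /\ st_rho u * st_eint u >= st_rho u * e (st_rho u)^-1 s0.

Definition aux_state (f : 'cV[R]_(d.+2) -> 'M[R]_(d.+2, d))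
  (ui uj : 'cV[R]_(d.+2)) (n : 'cV[R]_d) (lam : R) : 'cV[R]_(d.+2) :=
  2^-1 *: (ui + uj) - (2 * lam)^-1 *: ((f uj - f ui) *m n).

Definition unit_vec (n : 'cV[R]_d) : Prop := \sum_(k < d) (n k ord0) ^+ 2 = 1.

End Euler.

Definition isentrope_convex (R : realType) (e : R -> R -> R) (s0 : R) : Prop :=
  forall t1 t2 t : R, 0 < t1 -> 0 < t2 -> 0 <= t <= 1 ->
    e (t * t1 + (1 - t) * t2) s0 <= t * e t1 s0 + (1 - t) * e t2 s0.

(* Main.v *)
Require Import Defs.
From HB Require Import structures.
From mathcomp Require Import all_boot all_order all_algebra.
From mathcomp Require Import reals.
From mathcomp Require Import ring lra.
Import Order.TTheory GRing.Theory Num.Theory.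
Local Open Scope ring_scope.

Section H.
Variables (R : realType) (d : nat) (e : R -> R -> R) (s0 : R).

Lemma quad2 (t a b r s : R) : 0 <= t <= 1 -> 0 < r -> 0 < s ->
  (t*a+(1-t)*b)^+2/(2*(t*r+(1-t)*s)) <= t*(a^+2/(2*r)) + (1-t)*(b^+2/(2*s)).
Proof.
move=> /andP[t0 t1] r0 s0'.
have D0 : 0 < t*r+(1-t)*s.
  case: (ltrP 0 t) => tp.
    have : 0 < t * r by apply: mulr_gt0.
    have : 0 <= (1-t)*s by apply: mulr_ge0; lra.
    lra.
  have -> : t = 0 by lra.
  lra.
rewrite -subr_ge0.
have -> : t*(a^+2/(2*r)) + (1-t)*(b^+2/(2*s)) - (t*a+(1-t)*b)^+2/(2*(t*r+(1-t)*s))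
   = t*(1-t)*(a*s-b*r)^+2/(2*r*s*(t*r+(1-t)*s)).
  field; apply/and3P; split; rewrite ?lt0r_neq0 //.
apply: divr_ge0; last by apply: ltW; rewrite !mulr_gt0.
apply: mulr_ge0; last exact: sqr_ge0.
apply: mulr_ge0; lra.
Qed.

Lemma persp (t r s : R) : isentrope_convex e s0 -> 0 <= t <= 1 -> 0 < r -> 0 < s ->
  (t*r+(1-t)*s) * e (t*r+(1-t)*s)^-1 s0 <= t*(r*e r^-1 s0) + (1-t)*(s*e s^-1 s0).
Proof.
move=> hc /andP[t0 t1] r0 s0'.
set D := t*r+(1-t)*s.
have D0 : 0 < D.
  case: (ltrP 0 t) => tp.
    have : 0 < t * r by apply: mulr_gt0.
    have : 0 <= (1-t)*s by apply: mulr_ge0; lra.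
    rewrite /D; lra.
  rewrite /D; have -> : t = 0 by lra.
  lra.
set p := t*r/D.
have p0 : 0 <= p by rewrite /p divr_ge0 // ?mulr_ge0 // ltW.
have p1 : p <= 1.
  rewrite /p ler_pdivrMr // mul1r /D.
  have : 0 <= (1-t)*s by apply: mulr_ge0; lra.
  lra.
have hD : D^-1 = p * r^-1 + (1-p) * s^-1.
  rewrite /p /D; field; apply/and3P; split; rewrite ?lt0r_neq0 //.
have := hc r^-1 s^-1 p; rewrite invr_gt0 r0 invr_gt0 s0' p0 p1 => /(_ isT isT isT).
rewrite -hD => h.
have := ler_wpM2l (ltW D0) h.
have -> : D * (p * e r^-1 s0 + (1 - p) * e s^-1 s0) = t*(r*e r^-1 s0) + (1-t)*(s*e s^-1 s0).
  rewrite /p /D; field; rewrite lt0r_neq0 //.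
done.
Qed.


Lemma rho_eint (u : 'cV[R]_(d.+2)) : 0 < st_rho u ->
  st_rho u * st_eint u = st_E u - st_m2 u / (2 * st_rho u).
Proof. move=> h; rewrite /st_eint; field; rewrite lt0r_neq0 //. Qed.

Lemma adm_conv (t : R) (x y : 'cV[R]_(d.+2)) : isentrope_convex e s0 -> 0 <= t <= 1 ->
  admissible e s0 x -> admissible e s0 y -> admissible e s0 (t *: x + (1-t) *: y).
Proof.
move=> hc ht [rx hx] [ry hy].
rewrite /admissible in hx hy *.
rewrite rho_eint // in hx; rewrite rho_eint // in hy.
have hr : st_rho (t *: x + (1-t) *: y) = t * st_rho x + (1-t) * st_rho y.
  by rewrite /st_rho !mxE.
have hE : st_E (t *: x + (1-t) *: y) = t * st_E x + (1-t) * st_E y.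
  by rewrite /st_E !mxE.
have D0 : 0 < t * st_rho x + (1-t) * st_rho y.
  case/andP: ht => t0 t1.
  case: (ltrP 0 t) => tp.
    have : 0 < t * st_rho x by apply: mulr_gt0.
    have : 0 <= (1-t)* st_rho y by apply: mulr_ge0; lra.
    lra.
  have -> : t = 0 by lra.
  lra.
split; rewrite hr //.
rewrite -hr rho_eint ?hr // hE.
have hm : st_m2 (t *: x + (1-t) *: y) / (2 * (t * st_rho x + (1-t) * st_rho y))
   <= t * (st_m2 x / (2 * st_rho x)) + (1-t) * (st_m2 y / (2 * st_rho y)).
  rewrite /st_m2 !mulr_suml !mulr_sumr -big_split /=.
  apply: ler_sum => k _; rewrite !mxE.
  by apply: quad2.
have := persp t _ _ hc ht rx ry.
case/andP: ht => t0 t1.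
have h1 := ler_wpM2l t0 hx.
have h2 : 0 <= 1 - t by lra.
have h3 := ler_wpM2l h2 hy.
lra.
Qed.

End H.

Definition Cn (R : realType) (d : nat) (e : R -> R -> R) (s0 : R) (u : 'cV[R]_(d.+2)) (w : R) :=
  (w = 0 /\ u = 0) \/ (0 < w /\ admissible e s0 (w^-1 *: u)).
Arguments Cn {R d}.

Lemma Cn_add (R : realType) (d : nat) (e : R -> R -> R) (s0 : R) u1 w1 u2 w2 :
  isentrope_convex e s0 ->
  @Cn R d e s0 u1 w1 -> Cn e s0 u2 w2 -> Cn e s0 (u1 + u2) (w1 + w2).
Proof.
move=> hc [[-> ->]|[p1 a1]] [[-> ->]|[p2 a2]].
- by left; rewrite !addr0.
- by right; rewrite !add0r.
- by right; rewrite !addr0.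
right; have W0 : 0 < w1 + w2 by lra.
split=> //.
have -> : (w1 + w2)^-1 *: (u1 + u2) =
   (w1 / (w1+w2)) *: (w1^-1 *: u1) + (1 - w1/(w1+w2)) *: (w2^-1 *: u2).
  rewrite !scalerA scalerDr; congr (_ *: _ + _ *: _); field.
  all: have n1 := lt0r_neq0 p1; have n2 := lt0r_neq0 p2; have n3 := lt0r_neq0 W0.
  all: rewrite ?n1 ?n2 ?n3 //.
apply: adm_conv => //.
apply/andP; split; first by rewrite divr_ge0 // ltW.
by rewrite ler_pdivrMr // mul1r; lra.
Qed.

Lemma Cn_sum (R : realType) (d : nat) (e : R -> R -> R) (s0 : R) (V : finType)
  (A : {set V}) (w : V -> R) (x : V -> 'cV[R]_(d.+2)) :
  isentrope_convex e s0 ->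
  (forall k, k \in A -> 0 <= w k) -> (forall k, k \in A -> admissible e s0 (x k)) ->
  Cn e s0 (\sum_(k in A) w k *: x k) (\sum_(k in A) w k).
Proof.
move=> hc hw hx.
apply: (big_ind2 (fun u w => Cn e s0 u w)).
- by left.
- by move=> ? ? ? ?; apply: Cn_add.
move=> k kA.
have := hw k kA; rewrite le0r => /orP[/eqP ->|wp].
  by left; rewrite scale0r.
right; split=> //; rewrite scalerA mulVf; first by rewrite scale1r; apply: hx.
by rewrite gt_eqF.
Qed.

Theorem proposition4p1 (R : realType) (d : nat) (e : R -> R -> R) (s0 : R)
  (f : 'cV[R]_(d.+2) -> 'M[R]_(d.+2, d))
  (V : finType) (I : V -> {set V}) (U : V -> 'cV[R]_(d.+2))
  (n : V -> V -> 'cV[R]_d) (lam omega mu : V -> V -> R) :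
  isentrope_convex e s0 ->
  (forall i, i \in I i) ->
  (forall i, admissible e s0 (U i)) ->
  (forall i j, j \in I i -> unit_vec (n i j)) ->
  (forall i j, j \in I i -> 0 < lam i j) ->
  (forall i j, j \in I i -> admissible e s0 (aux_state f (U i) (U j) (n i j) (lam i j))) ->
  (forall i k, k \in I i -> 0 <= omega i k <= 1) ->
  (forall i j, j \in I i :\ i -> 0 <= mu i j <= 1) ->
  (forall i, \sum_(k in I i) omega i k + \sum_(j in I i :\ i) mu i j = 1) ->
  forall i, admissible e s0
    (\sum_(k in I i) omega i k *: U k
     + \sum_(j in I i :\ i) mu i j *: aux_state f (U i) (U j) (n i j) (lam i j)).
Proof.
move=> hc _ hU _ _ haux homega hmu hsum i.
have h1 := @Cn_sum R d e s0 V (I i) (omega i) U hc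
  (fun k hk => proj1 (andP (homega i k hk))) (fun k _ => hU k).
have h2 := @Cn_sum R d e s0 V (I i :\ i) (mu i)
  (fun j => aux_state f (U i) (U j) (n i j) (lam i j)) hc
  (fun k hk => proj1 (andP (hmu i k hk)))
  (fun k hk => haux i k (subsetP (subD1set _ _) k hk)).
have := Cn_add _ _ _ _ _ _ _ _ hc h1 h2; rewrite hsum => -[[/eqP]|[_]]; first by rewrite oner_eq0.
by rewrite invr1 scale1r.
Qed.
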